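(* Assume the setting below with $Y_i(0)=0$ for all $i$, and let $p^{\mathrm H}_{k,c}=G_{\mathrm H}(n(c);N,N-k,N_1)$ for $0\le k\le N$ and $c\in\mathbb{R}$. (a) $p^{\mathrm H}_{k,c}$ is monotone non-decreasing in $c$ and monotone non-increasing in $k$. (b) Fix $1\le k\le N$ and $\alpha\in(0,1)$. The set $\{c\in\mathbb{R}: p^{\mathrm H}_{k,c}>\alpha\}$ equals $[\,y_{(k(\alpha))},\infty)$, where $$k(\alpha)\equiv N_1-Q_{\mathrm H}(1-\alpha;N,N-k,N_1).$$ Moreover, $\Pr\big(\tau_{(k)}\ge y_{(k(\alpha))}\big)\ge 1-\alpha$. (c) Fix $c\in\mathbb{R}$ and $\alpha\in(0,1)$. The set $\{N-k: p^{\mathrm H}_{k,c}>\alpha,\ 0\le k\le N\}$ equals $\{n_{c,\alpha},n_{c,\alpha}+1,\dots,N\}$, where $$n_{c,\alpha}=N-\max\{k: G_{\mathrm H}(n(c);N,N-k,N_1)>\alpha,\ 0\le k\le N\}.$$ Moreover, this set contains $N(c)$ with probability at least $1-\alpha$.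
   Context: Setting: - There are $N$ units with fixed potential outcomes $Y_i(1),Y_i(0)$ and ITE $\tau_i=Y_i(1)-Y_i(0)$. - The sorted ITEs are $\tau_{(1)}\le\dots\le\tau_{(N)}$. - CRE: the assignment vector $Z\in\{0,1\}^N$ is uniformly distributed over vectors with exactly $N_1$ ones, where $1\le N_1<N$. - The observed outcome is $Y_i=Z_iY_i(1)+(1-Z_i)Y_i(0)$. - $N(c)=\sum_i\mathbb{1}(\tau_i>c)$ and $n(c)=\sum_iZ_i\mathbb{1}(Y_i>c)$. - $G_{\mathrm H}(x;N,n,N_1)=\Pr(X\ge x)$ for $X$ Hypergeometric with parameters $(N,n,N_1)$ (population size $N$, $n$ marked items, sample size $N_1$). - $Q_{\mathrm H}(\theta;N,n,N_1)=\inf\{x:\Pr(X\le x)\ge\theta\}$ is the $\theta$-quantile of that distribution. - $y_{(1)}\le\dots\le y_{(N_1)}$ are the sorted observed outcomes of the treated units ($Z_i=1$), with the convention $y_{(0)}=-\infty$. *)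

(* Defs.v *)
(* finite randomization (CRE) as uniform counting over
   subsets Z of 'I_N of size N1 (Z = set of treated units). *)
From mathcomp Require Import all_boot all_order all_algebra.
Set Implicit Arguments.
Unset Strict Implicit.
Unset Printing Implicit Defensive.
Import Order.TTheory GRing.Theory Num.Theory.
Local Open Scope ring_scope.

Definition hyper_pmf {R : realFieldType} (N n N1 j : nat) : R :=
  ('C(n, j) * 'C(N - n, N1 - j))%:R / 'C(N, N1)%:R.

Definition G_H {R : realFieldType} (x N n N1 : nat) : R :=
  \sum_(x <= j < N1.+1) hyper_pmf N n N1 j.

Definition F_H {R : realFieldType} (x N n N1 : nat) : R :=
  \sum_(0 <= j < N1.+1 | (j <= x)%N) hyper_pmf N n N1 j.

(* Q_H(theta; N, n, N1) = inf {x : Pr(X <= x) >= theta}: the least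
   x in 0..N1 with F_H x >= theta (the infimum over reals is attained at
   such an integer since the CDF is a right-continuous step function). *)
Definition Q_H {R : realFieldType} (theta : R) (N n N1 : nat) : nat :=
  find (fun x => theta <= F_H x N n N1) (iota 0 N1.+1).

Definition ite {R : realFieldType} {N : nat} (Y1 Y0 : 'I_N -> R) (i : 'I_N) : R :=
  Y1 i - Y0 i.

Definition Yobs {R : realFieldType} {N : nat} (Y1 Y0 : 'I_N -> R)
  (Z : {set 'I_N}) (i : 'I_N) : R :=
  if i \in Z then Y1 i else Y0 i.

Definition Nc {R : realFieldType} {N : nat} (Y1 Y0 : 'I_N -> R) (c : R) : nat :=
  #|[set i | c < ite Y1 Y0 i]|.

Definition nc {R : realFieldType} {N : nat} (Y1 Y0 : 'I_N -> R)
  (Z : {set 'I_N}) (c : R) : nat :=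
  #|[set i in Z | c < Yobs Y1 Y0 Z i]|.

(* tau_(k), k-th smallest ITE (1-indexed) *)
Definition sorted_ite {R : realFieldType} {N : nat} (Y1 Y0 : 'I_N -> R) (k : nat) : R :=
  nth 0 (sort <=%R [seq ite Y1 Y0 i | i <- enum 'I_N]) k.-1.

Definition treated_sorted {R : realFieldType} {N : nat} (Y1 Y0 : 'I_N -> R)
  (Z : {set 'I_N}) : seq R :=
  sort <=%R [seq Yobs Y1 Y0 Z i | i <- enum Z].

(* ge_yord j c  <->  y_(j) <= c, with the convention y_(0) = -oo *)
Definition ge_yord {R : realFieldType} {N : nat} (Y1 Y0 : 'I_N -> R)
  (Z : {set 'I_N}) (j : nat) (c : R) : bool :=
  if j is 0 then true else nth 0 (treated_sorted Y1 Y0 Z) j.-1 <= c.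

Definition cre_prob {R : realFieldType} {N : nat} (N1 : nat)
  (E : pred {set 'I_N}) : R :=
  #|[set Z : {set 'I_N} | (#|Z| == N1) && E Z]|%:R /
  #|[set Z : {set 'I_N} | #|Z| == N1]|%:R.

Definition pH {R : realFieldType} {N : nat} (Y1 Y0 : 'I_N -> R) (N1 : nat)
  (Z : {set 'I_N}) (k : nat) (c : R) : R :=
  G_H (nc Y1 Y0 Z c) N (N - k) N1.

Definition k_alpha {R : realFieldType} (N N1 k : nat) (alpha : R) : nat :=
  (N1 - Q_H (1 - alpha) N (N - k) N1)%N.

Definition n_calpha {R : realFieldType} {N : nat} (Y1 Y0 : 'I_N -> R) (N1 : nat)
  (Z : {set 'I_N}) (c alpha : R) : nat :=
  (N - \max_(k < N.+1 | (alpha < G_H (nc Y1 Y0 Z c) N (N - k) N1)%R) k)%N.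

(* Main.v *)
Require Import Defs.
From mathcomp Require Import all_boot all_order all_algebra.
From mathcomp Require Import lra zify.
Set Implicit Arguments. Unset Strict Implicit. Unset Printing Implicit Defensive.
Import Order.TTheory GRing.Theory Num.Theory.
Lemma count_inter (N N1 : nat) (A : {set 'I_N}) j : (j <= N1)%N ->
  #|[set Z : {set 'I_N} | (#|Z| == N1) && (#|Z :&: A| == j)]| =
  ('C(#|A|, j) * 'C(N - #|A|, N1 - j))%N.
Proof.
move=> hj.
set T := [set Z : {set 'I_N} | _].
pose f (Z : {set 'I_N}) := (Z :&: A, Z :&: ~: A).
have finj : injective f.
  move=> Z1 Z2 [h1 h2]; apply/setP => i.
  move/setP: h1 => /(_ i); move/setP: h2 => /(_ i).
  rewrite !inE; by case: (i \in A); rewrite ?andbT ?andbF.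
have -> : #|T| = #|f @: T| by rewrite card_imset.
have -> : f @: T = setX [set S : {set 'I_N} | S \subset A & #|S| == j]
                        [set S : {set 'I_N} | S \subset ~: A & #|S| == N1 - j].
  apply/setP => [[S U]]; rewrite !inE /=; apply/imsetP/andP.
  - case=> Z; rewrite inE => /andP[/eqP hZ /eqP hZA] [-> ->].
    rewrite !subsetIr hZA eqxx; split => //.
    rewrite -setDE -hZ -(cardsID A Z) hZA.
    by rewrite addKn eqxx.
  - case=> /andP[hSA /eqP hS] /andP[hUA /eqP hU].
    have hI : S :&: A = S by apply/setIidPl.
    have hUA' : U :&: A = set0.
      apply/setP => i; rewrite !inE; apply/andP => -[hi hiA].
      by move/subsetP: hUA => /(_ i hi); rewrite inE hiA.
    have hSC : S :&: ~: A = set0.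
      apply/setP => i; rewrite !inE; apply/andP => -[hi hiA].
      by move/subsetP: hSA => /(_ i hi); rewrite (negbTE hiA).
    have hUC : U :&: ~: A = U by apply/setIidPl.
    exists (S :|: U); last by rewrite /f !setIUl hI hUA' hSC hUC setU0 set0U.
    rewrite inE setIUl hI hUA' setU0 cardsU hS eqxx andbT.
    have -> : S :&: U = set0.
      apply/setP => i; rewrite !inE; apply/andP => -[hi hu].
      move/subsetP: hSA => /(_ i hi) hiA. move/subsetP: hUA => /(_ i hu).
      by rewrite inE hiA.
    by rewrite cards0 subn0 hU subnKC.
rewrite cardsX !cards_draws; congr (_ * 'C(_, _))%N.
have h := cardsC A; rewrite [#|'I_N|]card_ord in h. apply/eqP; rewrite -(eqn_add2l #|A|) h subnKC //; by rewrite -[X in _ <= X]h leq_addr.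
Qed.

Local Open Scope ring_scope.

Definition cnt (N N1 : nat) (A : {set 'I_N}) (P : pred nat) : nat :=
  #|[set Z : {set 'I_N} | (#|Z| == N1) && P #|Z :&: A|]|.

Lemma cnt_sum (N N1 : nat) (A : {set 'I_N}) (P : pred nat) :
  (\sum_(j < N1.+1 | P j) #|[set Z : {set 'I_N} | (#|Z| == N1) && (#|Z :&: A| == j)]|)%N
  = cnt N1 A P.
Proof.
have hb : forall Z : {set 'I_N}, #|Z| == N1 -> (#|Z :&: A| < N1.+1)%N.
  by move=> Z /eqP <-; rewrite ltnS subset_leq_card // subsetIl.
rewrite /cnt -sum1_card.
rewrite (partition_big (fun Z : {set 'I_N} => (inord #|Z :&: A| : 'I_N1.+1)) (fun j : 'I_N1.+1 => P j)) /=.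
  apply: eq_bigr => j Pj; rewrite -sum1_card; apply: eq_bigl => Z; rewrite !inE.
  case hZ: (#|Z| == N1) => //=.
  rewrite -(inj_eq val_inj) /= inordK ?hb //.
  by case: eqP => [->|_]; rewrite ?Pj ?andbF.
by move=> Z; rewrite inE => /andP[hZ hP]; rewrite inordK ?hb.
Qed.

Lemma pmf_sum (R : realFieldType) (N N1 : nat) (A : {set 'I_N}) (P : pred nat) :
  \sum_(j < N1.+1 | P j) (hyper_pmf N #|A| N1 j : R) = (cnt N1 A P)%:R / ('C(N, N1))%:R.
Proof.
rewrite /hyper_pmf -mulr_suml -natr_sum -cnt_sum; congr (_%:R / _).
by apply: eq_bigr => j _; rewrite count_inter // -ltnS.
Qed.

Lemma G_cnt (R : realFieldType) (N N1 : nat) (A : {set 'I_N}) x :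
  (G_H x N #|A| N1 : R) = (cnt N1 A (fun j => x <= j)%N)%:R / ('C(N, N1))%:R.
Proof.
rewrite /G_H big_geq_mkord -pmf_sum; apply: eq_bigl => j //.
Qed.

Lemma F_cnt (R : realFieldType) (N N1 : nat) (A : {set 'I_N}) x :
  (F_H x N #|A| N1 : R) = (cnt N1 A (fun j => j <= x)%N)%:R / ('C(N, N1))%:R.
Proof.
by rewrite /F_H big_mkord -pmf_sum.
Qed.

Lemma cnt_tot (N N1 : nat) (A : {set 'I_N}) (P : pred nat) :
  (forall j, j <= N1 -> P j)%N -> cnt N1 A P = 'C(N, N1).
Proof.
move=> hP; rewrite /cnt -[in RHS](card_ord N) -card_draws; apply: eq_card => Z.
rewrite !inE; case hZ: (#|Z| == N1) => //=; apply: hP.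
by rewrite -(eqP hZ) subset_leq_card // subsetIl.
Qed.

Lemma cnt_compl (N N1 : nat) (A : {set 'I_N}) (P P' : pred nat) :
  (forall j, P' j = ~~ P j) -> (cnt N1 A P + cnt N1 A P')%N = 'C(N, N1).
Proof.
move=> hP; rewrite -(cnt_tot A (P := predT)) // /cnt.
rewrite -[in RHS](cardsID [set Z : {set 'I_N} | P #|Z :&: A|]).
congr (_ + _)%N; apply: eq_card => Z; rewrite !inE ?andbT //.
by rewrite hP andbC.
Qed.

Lemma cnt_mono (N N1 : nat) (A B : {set 'I_N}) (P P' : pred nat) :
  (forall Z : {set 'I_N}, #|Z| = N1 -> P #|Z :&: A| -> P' #|Z :&: B|) ->
  (cnt N1 A P <= cnt N1 B P')%N.
Proof.
move=> h; apply: subset_leq_card; apply/subsetP => Z; rewrite !inE.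
by case/andP => /eqP hZ hP; rewrite hZ eqxx /= h.
Qed.

Lemma Cpos (R : realFieldType) (N N1 : nat) : (N1 <= N)%N -> 0 < ('C(N, N1))%:R :> R.
Proof. by move=> h; rewrite ltr0n bin_gt0. Qed.

Lemma ratio_le (R : realFieldType) (N N1 m n : nat) : (m <= n)%N ->
  m%:R / ('C(N, N1))%:R <= n%:R / ('C(N, N1))%:R :> R.
Proof. by move=> h; rewrite ler_wpM2r ?invr_ge0 ?ler0n // ler_nat. Qed.

Lemma F_top (R : realFieldType) (N N1 : nat) (A : {set 'I_N}) y : (N1 <= N)%N -> (N1 <= y)%N ->
  (F_H y N #|A| N1 : R) = 1.
Proof.
move=> hN hy; rewrite F_cnt cnt_tot ?divff ?(gt_eqF (Cpos R hN)) //.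
by move=> j hj; apply: leq_trans hy.
Qed.

Lemma G_zero (R : realFieldType) (N N1 : nat) (A : {set 'I_N}) : (N1 <= N)%N ->
  (G_H 0 N #|A| N1 : R) = 1.
Proof.
by move=> hN; rewrite G_cnt cnt_tot ?divff ?(gt_eqF (Cpos R hN)).
Qed.

Lemma G_F (R : realFieldType) (N N1 : nat) (A : {set 'I_N}) y : (N1 <= N)%N ->
  (G_H y.+1 N #|A| N1 : R) = 1 - F_H y N #|A| N1.
Proof.
move=> hN; rewrite G_cnt F_cnt.
have h := cnt_compl N1 A (P := fun j => (y.+1 <= j)%N) (P' := fun j => (j <= y)%N).
have hC := Cpos R hN.
rewrite -h in hC *; last by move=> j; rewrite -ltnNge.
by apply/eqP; rewrite eq_sym subr_eq -mulrDl -natrD divff // gt_eqF.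
Qed.

Lemma F_mono (R : realFieldType) (N N1 : nat) (A : {set 'I_N}) y y' : (y <= y')%N ->
  (F_H y N #|A| N1 : R) <= F_H y' N #|A| N1.
Proof.
move=> h; rewrite !F_cnt ratio_le // cnt_mono // => Z _ hZ; exact: leq_trans h.
Qed.

Lemma Q_props (R : realFieldType) (N N1 : nat) (A : {set 'I_N}) (th : R) : (N1 <= N)%N -> th <= 1 ->
  [/\ (Q_H th N #|A| N1 <= N1)%N, th <= F_H (Q_H th N #|A| N1) N #|A| N1 &
      forall y, (y < Q_H th N #|A| N1)%N -> F_H y N #|A| N1 < th].
Proof.
move=> hN hth.
have hp : has (fun y => th <= F_H y N #|A| N1) (iota 0 N1.+1).
  apply/hasP; exists N1; first by rewrite mem_iota add0n ltnS leqnn.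
  by rewrite F_top.
have hQ : (Q_H th N #|A| N1 < N1.+1)%N.
  by move: hp; rewrite has_find size_iota.
split.
- by rewrite -ltnS.
- by have := nth_find 0 hp; rewrite nth_iota ?add0n.
- move=> y hy; have := before_find 0 hy; rewrite nth_iota ?add0n; first by move/negbT; rewrite -ltNge.
  exact: (ltn_trans hy).
Qed.

Lemma G_Q_iff (R : realFieldType) (N N1 : nat) (A : {set 'I_N}) x (th : R) :
  (N1 <= N)%N -> 0 < th <= 1 ->
  (1 - th < G_H x N #|A| N1) = (x <= Q_H th N #|A| N1)%N.
Proof.
move=> hN /andP[th0 th1].
have [_ pQ nQ] := Q_props A hN th1.
case: x => [|y]; first by rewrite G_zero // leq0n; lra.
rewrite G_F //.
case: ltnP => hy.
  by have := nQ y hy => h; apply/idP; lra.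
have := @F_mono R N N1 A _ _ hy; move: pQ => h1 h2; apply/negbTE; rewrite -leNgt; lra.
Qed.

Lemma sorted_count (R : realFieldType) (s : seq R) c m : sorted <=%R s ->
  (0 < m <= size s)%N ->
  (nth 0 s m.-1 <= c) = (count (fun y => (c < y)%R) s <= size s - m)%N.
Proof.
move=> hs /andP[m0 ms].
have hn := sorted_leq_nth le_trans lexx 0 hs.
have hle : forall i j, (i <= j)%N -> (j < size s)%N -> nth 0 s i <= nth 0 s j.
  move=> i j hij hj; apply: hn => //; rewrite inE //; exact: leq_ltn_trans hij hj.
have hm1 : (m.-1 < size s)%N by lia.
have -> : count (fun y => (c < y)%R) s =
   (count (fun y => (c < y)%R) (take m.-1 s) + count (fun y => (c < y)%R) (drop m.-1 s))%N.
  by rewrite -count_cat cat_take_drop.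
case: leP => h.
- have h0 : count (fun y => (c < y)%R) (take m.-1 s) = 0%N.
    apply/eqP; rewrite -leqn0 leqNgt -has_count; apply/hasPn => y /(nthP 0) [i hi <-].
    rewrite size_take hm1 in hi; rewrite nth_take //.
    rewrite -leNgt; apply: le_trans h; apply: hle => //; lia.
  rewrite h0 add0n.
  have hf : (c < nth 0 s m.-1) = false by rewrite ltNge h.
  rewrite (drop_nth 0 hm1) /= hf add0n.
  have := count_size (fun y => (c < y)%R) (drop m.-1.+1 s).
  by rewrite size_drop prednK // => ->.
- apply/esym/negbTE; rewrite -ltnNge.
  have : count (fun y => (c < y)%R) (drop m.-1 s) = size (drop m.-1 s).
    apply/eqP; rewrite -all_count; apply/(all_nthP 0) => i hi.
    rewrite size_drop in hi; rewrite nth_drop; apply: lt_le_trans h _; apply: hle.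
      exact: leq_addr.
    by rewrite -ltn_subRL.
  move=> ->; apply: leq_trans (leq_addl _ _); rewrite size_drop.
  move: m0 ms; clear; case: m => [|m] //= _ hm; lia.
Qed.

Lemma card_An (N n : nat) : (n <= N)%N -> #|[set i : 'I_N | (i < n)%N]| = n.
Proof.
move=> hn; rewrite -sum1_card.
rewrite (eq_bigl (fun i : 'I_N => (i < n)%N)); last by move=> i; rewrite inE.
by rewrite (big_ord_narrow (F := fun _ => 1%N) hn) sum1_card card_ord.
Qed.

Lemma count_enum_card (N : nat) (Z : {set 'I_N}) (P : pred 'I_N) :
  count P (enum Z) = #|[set i in Z | P i]|.
Proof.
rewrite -size_filter -(card_uniqP _); last exact/filter_uniq/enum_uniq.
by apply: eq_card => i; rewrite mem_filter mem_enum inE andbC.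
Qed.

Lemma G_cnt_n (R : realFieldType) (N N1 n : nat) x : (n <= N)%N ->
  (G_H x N n N1 : R) =
  (cnt N1 [set i : 'I_N | (i < n)%N] (fun j => x <= j)%N)%:R / ('C(N, N1))%:R.
Proof. by move=> hn; rewrite -G_cnt card_An. Qed.

Lemma F_cnt_n (R : realFieldType) (N N1 n : nat) x : (n <= N)%N ->
  (F_H x N n N1 : R) =
  (cnt N1 [set i : 'I_N | (i < n)%N] (fun j => j <= x)%N)%:R / ('C(N, N1))%:R.
Proof. by move=> hn; rewrite -F_cnt card_An. Qed.

Lemma G_mono_x (R : realFieldType) (N N1 n : nat) x x' : (n <= N)%N -> (x' <= x)%N ->
  (G_H x N n N1 : R) <= G_H x' N n N1.
Proof.
move=> hn hx; rewrite !G_cnt_n // ratio_le // cnt_mono // => Z _ h.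
exact: leq_trans hx h.
Qed.

Lemma An_sub (N a b : nat) : (a <= b)%N ->
  [set i : 'I_N | (i < a)%N] \subset [set i : 'I_N | (i < b)%N].
Proof. by move=> h; apply/subsetP => i; rewrite !inE => hi; apply: leq_trans h. Qed.

Lemma G_mono_n (R : realFieldType) (N N1 a b : nat) x : (a <= b)%N -> (b <= N)%N ->
  (G_H x N a N1 : R) <= G_H x N b N1.
Proof.
move=> hab hb; rewrite !G_cnt_n //; last exact: leq_trans hb.
rewrite ratio_le // cnt_mono // => Z _ h; apply: leq_trans h _.
by apply: subset_leq_card; apply: setIS; apply: An_sub.
Qed.

Lemma F_mono_n (R : realFieldType) (N N1 a b : nat) x : (a <= b)%N -> (b <= N)%N ->
  (F_H x N b N1 : R) <= F_H x N a N1.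
Proof.
move=> hab hb; rewrite !F_cnt_n //; last exact: leq_trans hb.
rewrite ratio_le // cnt_mono // => Z _ h; apply: leq_trans _ h.
by apply: subset_leq_card; apply: setIS; apply: An_sub.
Qed.

Lemma G_Q_iff_n (R : realFieldType) (N N1 n : nat) x (th : R) :
  (N1 <= N)%N -> (n <= N)%N -> 0 < th <= 1 ->
  (1 - th < G_H x N n N1) = (x <= Q_H th N n N1)%N.
Proof.
move=> hN hn hth; have := G_Q_iff [set i : 'I_N | (i < n)%N] x hN hth.
by rewrite card_An.
Qed.

Lemma Q_props_n (R : realFieldType) (N N1 n : nat) (th : R) : (N1 <= N)%N -> (n <= N)%N -> th <= 1 ->
  (Q_H th N n N1 <= N1)%N /\ th <= F_H (Q_H th N n N1) N n N1.
Proof.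
move=> hN hn hth; have := Q_props [set i : 'I_N | (i < n)%N] hN hth.
by rewrite card_An // => -[].
Qed.

Lemma G_full (R : realFieldType) (N N1 : nat) x : (N1 <= N)%N -> (x <= N1)%N ->
  (G_H x N N N1 : R) = 1.
Proof.
move=> hN hx; rewrite G_cnt_n //.
have -> : cnt N1 [set i : 'I_N | (i < N)%N] (fun j => (x <= j)%N) = 'C(N, N1).
  rewrite -(cnt_tot [set i : 'I_N | (i < N)%N] (P := predT)) //.
  apply: eq_card => Z; rewrite !inE.
  case hZ: (#|Z| == N1) => //=.
  have -> : Z :&: [set i : 'I_N | (i < N)%N] = Z.
    by apply/setIidPl; apply/subsetP => i _; rewrite inE ltn_ord.
  by rewrite (eqP hZ).
by rewrite divff // gt_eqF // Cpos.
Qed.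

Lemma prob_ge (R : realFieldType) (N N1 : nat) (A : {set 'I_N}) (E : pred {set 'I_N}) x :
  (N1 <= N)%N ->
  (forall Z : {set 'I_N}, #|Z| = N1 -> (#|Z :&: A| <= x)%N -> E Z) ->
  (F_H x N #|A| N1 : R) <= cre_prob N1 E.
Proof.
move=> hN hE; rewrite F_cnt /cre_prob.
have -> : #|[set Z : {set 'I_N} | #|Z| == N1]| = 'C(N, N1).
  by rewrite card_draws card_ord.
rewrite ratio_le //; apply: subset_leq_card; apply/subsetP => Z; rewrite !inE.
by case/andP => /eqP hZ h; rewrite hZ eqxx /= hE.
Qed.

Theorem proposition2 (R : realFieldType) (N N1 : nat) (Y1 Y0 : 'I_N -> R)
  (hN1 : (1 <= N1)%N) (hN1N : (N1 < N)%N) (hY0 : forall i, Y0 i = 0) :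
  (* (a) monotonicity *)
  (forall Z : {set 'I_N}, #|Z| = N1 ->
     (forall (k : nat) (c c' : R), (k <= N)%N -> c <= c' ->
        pH Y1 Y0 N1 Z k c <= pH Y1 Y0 N1 Z k c') /\
     (forall (k k' : nat) (c : R), (k <= k' <= N)%N ->
        pH Y1 Y0 N1 Z k' c <= pH Y1 Y0 N1 Z k c)) /\
  (* (b) *)
  (forall (k : nat) (alpha : R), (1 <= k <= N)%N -> 0 < alpha < 1 ->
     (forall Z : {set 'I_N}, #|Z| = N1 -> forall c : R,
        alpha < pH Y1 Y0 N1 Z k c <-> ge_yord Y1 Y0 Z (k_alpha N N1 k alpha) c) /\
     1 - alpha <= cre_prob N1 (fun Z : {set 'I_N} =>
        ge_yord Y1 Y0 Z (k_alpha N N1 k alpha) (sorted_ite Y1 Y0 k))) /\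
  (* (c) *)
  (forall (c alpha : R), 0 < alpha < 1 ->
     (forall Z : {set 'I_N}, #|Z| = N1 -> forall m : nat,
        (exists k : nat, (k <= N)%N /\ alpha < pH Y1 Y0 N1 Z k c /\ m = (N - k)%N)
        <-> (n_calpha Y1 Y0 N1 Z c alpha <= m <= N)%N) /\
     1 - alpha <= cre_prob N1 (fun Z : {set 'I_N} =>
        [exists k : 'I_N.+1, (alpha < pH Y1 Y0 N1 Z k c) && (Nc Y1 Y0 c == N - k)%N])).
Proof.
have hN : (N1 <= N)%N := ltnW hN1N.
have ite_eq : forall i, ite Y1 Y0 i = Y1 i by move=> i; rewrite /ite hY0 subr0.
have nc_inter : forall Z c, nc Y1 Y0 Z c = #|Z :&: [set i | c < Y1 i]|.
  move=> Z c; apply: eq_card => i; rewrite !inE /Yobs; by case: (i \in Z).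
have nc_le : forall (Z : {set 'I_N}) (c : R), #|Z| = N1 -> (nc Y1 Y0 Z c <= N1)%N.
  by move=> Z c <-; rewrite nc_inter subset_leq_card // subsetIl.
have nc_anti : forall (Z : {set 'I_N}) (c c' : R), c <= c' -> (nc Y1 Y0 Z c' <= nc Y1 Y0 Z c)%N.
  move=> Z c c' hc; rewrite !nc_inter; apply: subset_leq_card; apply: setIS.
  by apply/subsetP => i; rewrite !inE => h; apply: le_lt_trans h.
have ha : forall Z : {set 'I_N}, #|Z| = N1 ->
     (forall (k : nat) (c c' : R), (k <= N)%N -> c <= c' ->
        pH Y1 Y0 N1 Z k c <= pH Y1 Y0 N1 Z k c') /\
     (forall (k k' : nat) (c : R), (k <= k' <= N)%N ->
        pH Y1 Y0 N1 Z k' c <= pH Y1 Y0 N1 Z k c).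
  move=> Z hZ; split.
  - move=> k c c' hk hc; rewrite /pH; apply: G_mono_x; [exact: leq_subr | exact: nc_anti].
  - move=> k k' c /andP[hkk' hk']; rewrite /pH; apply: G_mono_n; last exact: leq_subr.
    exact: leq_sub2l.
have piff : forall (alpha : R) n x, 0 < alpha < 1 -> (n <= N)%N ->
    (alpha < G_H x N n N1) = (x <= Q_H (1 - alpha) N n N1)%N.
  move=> alpha n x /andP[a0 a1] hn; rewrite -G_Q_iff_n //; last by apply/andP; split; lra.
  by rewrite opprB addrC subrK.
split => //.
split.
  move=> k alpha /andP[k1 kN] ha01.
  have hkN : (N - k <= N)%N := leq_subr k N.
  have [hQ pQ] := @Q_props_n R N N1 (N - k) (1 - alpha) hN hkN
     ltac:(by move: ha01 => /andP[a0 a1]; lra).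
  set Q := Q_H (1 - alpha) N (N - k) N1 in hQ pQ *.
  have bi : forall Z : {set 'I_N}, #|Z| = N1 -> forall c : R,
        alpha < pH Y1 Y0 N1 Z k c <-> ge_yord Y1 Y0 Z (k_alpha N N1 k alpha) c.
    move=> Z hZ c; rewrite /pH piff // -/Q /ge_yord /k_alpha -/Q.
    case eq: (N1 - Q)%N => [|j].
      have hQ' : (N1 <= Q)%N by rewrite -subn_eq0 eq.
      by split => // _; apply: leq_trans (nc_le Z c hZ) hQ'.
    set s := treated_sorted Y1 Y0 Z.
    have ss : sorted <=%R s := sort_sorted le_total _.
    have sz : size s = N1 by rewrite size_sort size_map -cardE hZ.
    have hc : count (fun y => (c < y)%R) s = nc Y1 Y0 Z c.
      by rewrite count_sort count_map count_enum_card.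
    have := @sorted_count R s c j.+1 ss.
    rewrite sz hc /= => ->; last by lia.
    have -> : (N1 - j.+1 = Q)%N by lia.
    by [].
  split; first exact: bi.
  set t := sort <=%R [seq ite Y1 Y0 i | i <- enum 'I_N].
  set tau := sorted_ite Y1 Y0 k.
  have etau : tau = nth 0 t k.-1 by [].
  set B := [set i : 'I_N | tau < Y1 i].
  have hB : (#|B| <= N - k)%N.
    have st : sorted <=%R t := sort_sorted le_total _.
    have szt : size t = N by rewrite size_sort size_map size_enum_ord.
    have := @sorted_count R t tau k st.
    rewrite szt -etau lexx => /(_ ltac:(by apply/andP; split)) /esym.
    rewrite count_sort count_map.
    have -> : #|B| = count (preim (ite Y1 Y0) (fun y => (tau < y)%R)) (enum 'I_N).
      rewrite -size_filter -(card_uniqP _); last exact/filter_uniq/enum_uniq.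
      by apply: eq_card => i; rewrite mem_filter mem_enum !inE /= ite_eq andbT.
    by [].
  apply: le_trans pQ _.
  apply: le_trans (@F_mono_n R N N1 #|B| (N - k) Q hB hkN) _.
  apply: prob_ge => // Z hZ hZB.
  by apply/(bi Z hZ); rewrite /pH piff // -/Q nc_inter.
move=> c alpha ha01.
have a1 : alpha < 1 by case/andP: ha01.
split.
  move=> Z hZ m.
  have P0 : alpha < pH Y1 Y0 N1 Z 0 c by rewrite /pH subn0 G_full // nc_le.
  have hA : (0 < #|(fun k : 'I_N.+1 => (alpha < G_H (nc Y1 Y0 Z c) N (N - k) N1)%R)|)%N.
    by apply/card_gt0P; exists ord0.
  have [k0 Pk0 eK] := eq_bigmax_cond (fun k : 'I_N.+1 => (k : nat)) hA.
  have Kmax : forall k : 'I_N.+1, alpha < G_H (nc Y1 Y0 Z c) N (N - k) N1 ->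
      (k <= \max_(k < N.+1 | (alpha < G_H (nc Y1 Y0 Z c) N (N - k) N1)%R) k)%N.
    by move=> k hk; apply: leq_bigmax_cond.
  rewrite /n_calpha.
  have eK' : \max_(k < N.+1 | alpha < G_H (nc Y1 Y0 Z c) N (N - k) N1) k = k0 := eK.
  rewrite eK' in Kmax *.
  have hk0 : (k0 <= N)%N by rewrite -ltnS.
  split.
    case=> k [hk [hPk ->]].
    have := Kmax (Ordinal (hk : (k < N.+1)%N)) hPk => /= hkk.
    by rewrite leq_subr andbT leq_sub2l.
  case/andP => h1 h2; exists (N - m)%N; split; first exact: leq_subr.
  split; last by rewrite subKn.
  have hle : (N - m <= k0)%N by lia.
  have [_ hmono] := ha Z hZ.
  apply: lt_le_trans (hmono (N - m)%N k0 c _); first exact: Pk0.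
  by rewrite hle.
set B := [set i : 'I_N | c < Y1 i].
have hNc : Nc Y1 Y0 c = #|B|.
  by apply: eq_card => i; rewrite !inE ite_eq.
have hBN : (#|B| <= N)%N by rewrite -[X in (_ <= X)%N](card_ord N) max_card.
have [hQ pQ] := @Q_props_n R N N1 #|B| (1 - alpha) hN hBN
     ltac:(by move: ha01 => /andP[a0 a1']; lra).
apply: le_trans pQ _.
apply: prob_ge => // Z hZ hZB.
apply/existsP; exists (inord (N - #|B|)).
rewrite inordK ?ltnS ?leq_subr // subKn // hNc eqxx andbT.
by rewrite /pH subKn // piff // nc_inter.
Qed.
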